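(* Let $(A,A^* )$ be a left-symmetric bialgebroid. Then for all $x\in\Gamma(A)$ and $\xi\in\Gamma(A^* )$, $$[a_A(x),a_{A^*}(\xi)]=a_{A^*}(L^*_x\xi)-a_A(L^*_\xi x),$$ where the left side is the commutator of vector fields, $L^*_x\xi\in\Gamma(A^* )$ is given by $\langle L^*_x\xi,y\rangle=a_A(x)\langle\xi,y\rangle-\langle\xi,x\cdot_Ay\rangle$, and $L^*_\xi x\in\Gamma(A)$ by $\langle L^*_\xi x,\eta\rangle=a_{A^*}(\xi)\langle x,\eta\rangle-\langle x,\xi\cdot_{A^*}\eta\rangle$.
   Context: A left-symmetric algebroid is a vector bundle $A\to M$ with an $\mathbb R$-bilinear multiplication $\cdot_A$ on $\Gamma(A)$ with $x\cdot_A(y\cdot_Az)-(x\cdot_Ay)\cdot_Az$ symmetric in $x,y$, and an anchor $a_A:A\to TM$ with $x\cdot_A(fy)=f(x\cdot_Ay)+a_A(x)(f)y$, $(fx)\cdot_Ay=f(x\cdot_Ay)$; $[x,y]_A=x\cdot_Ay-y\cdot_Ax$. The coboundary $\delta:C^n(A)\to C^{n+1}(A)$, $C^{n+1}(A)=\Gamma(\wedge^nA^*\otimes A^* )$, is $\delta\varphi(x_1,\dots,x_{n+1})=\sum_{i=1}^n(-1)^{i+1}a_A(x_i)\varphi(\dots,\hat{x_i},\dots,x_{n+1})-\sum_{i=1}^n(-1)^{i+1}\varphi(\dots,\hat{x_i},\dots,x_n,x_i\cdot_Ax_{n+1})+\sum_{i<j\le n}(-1)^{i+j}\varphi([x_i,x_j]_A,\dots,\hat{x_i},\dots,\hat{x_j},\dots,x_{n+1})$.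 The Lie derivative $\mathfrak L_x$ on $\Gamma(A\otimes A)$ is $\mathfrak L_x(y_1\otimes y_2)=(x\cdot_Ay_1)\otimes y_2+y_1\otimes[x,y_2]_A$. For left-symmetric algebroids $A$ and $A^*$ on dual bundles, $[\cdot,\cdot]_{A^*}$, $\delta_*$, $\mathfrak L_\xi$ are defined by the same formulas with $A$ and $A^*$ exchanged. $(A,A^* )$ is a left-symmetric bialgebroid if $\delta[\xi,\eta]_{A^*}=\mathfrak L_\xi\delta\eta-\mathfrak L_\eta\delta\xi$ and $\delta_*[x,y]_A=\mathfrak L_x\delta_*y-\mathfrak L_y\delta_*x$ for all $x,y\in\Gamma(A)$, $\xi,\eta\in\Gamma(A^* )$. *)

(* Defs.v *)
(* Algebraic (Serre--Swan) model of a left-symmetric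
   bialgebroid: F plays C^oo(M), P plays Gamma(A), Q plays Gamma(A^* ),
   vector fields are derivations of F. *)
From HB Require Import structures.
From mathcomp Require Import all_boot all_algebra.
From Stdlib Require Import ClassicalEpsilon.
Set Implicit Arguments.
Unset Strict Implicit.
Unset Printing Implicit Defensive.
Import GRing.Theory.
Local Open Scope ring_scope.

Definition is_derivation (F : comRingType) (D : F -> F) : Prop :=
  (forall f g, D (f + g) = D f + D g) /\
  (forall f g, D (f * g) = f * D g + D f * g).

Definition vf_comm (F : comRingType) (D1 D2 : F -> F) : F -> F :=
  fun f => D1 (D2 f) - D2 (D1 f).

Definition lsa_bracket (F : comRingType) (P : lmodType F)
  (mul : P -> P -> P) (x y : P) : P := mul x y - mul y x.

Definition is_left_symmetric_algebroid (F : comRingType) (P : lmodType F)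
  (mul : P -> P -> P) (a : P -> F -> F) : Prop :=
  (forall x y z, mul (x + y) z = mul x z + mul y z) /\
  (forall x y z, mul x (y + z) = mul x y + mul x z) /\
  (forall x y z, mul x (mul y z) - mul (mul x y) z
                 = mul y (mul x z) - mul (mul y x) z) /\
  (forall (f : F) x y, mul x (f *: y) = f *: mul x y + a x f *: y) /\
  (forall (f : F) x y, mul (f *: x) y = f *: mul x y) /\
  (forall x, is_derivation (a x)) /\
  (forall (f : F) x y g, a (f *: x + y) g = f * a x g + a y g).

Definition is_perfect_pairing (F : comRingType) (P Q : lmodType F)
  (pr : P -> Q -> F) : Prop :=
  (forall (f : F) x y xi, pr (f *: x + y) xi = f * pr x xi + pr y xi) /\
  (forall (f : F) x xi eta, pr x (f *: xi + eta) = f * pr x xi + pr x eta) /\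
  (forall x, (forall xi, pr x xi = 0) -> x = 0) /\
  (forall xi, (forall x, pr x xi = 0) -> xi = 0) /\
  (forall phi : P -> F, (forall (f : F) x y, phi (f *: x + y) = f * phi x + phi y) ->
     exists xi, forall x, pr x xi = phi x) /\
  (forall phi : Q -> F, (forall (f : F) xi eta, phi (f *: xi + eta) = f * phi xi + phi eta) ->
     exists x, forall xi, pr x xi = phi xi).

Definition flip_pair (F : comRingType) (P Q : lmodType F) (pr : P -> Q -> F)
  : Q -> P -> F := fun xi x => pr x xi.

(* the element of Q representing the functional phi on P (if any) *)
Definition dual_rep (F : comRingType) (P Q : lmodType F) (pr : P -> Q -> F)
  (phi : P -> F) : Q :=
  epsilon (inhabits (0 : Q)) (fun xi => forall y, pr y xi = phi y).

Definition Lstar (F : comRingType) (P Q : lmodType F) (mul : P -> P -> P)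
  (a : P -> F -> F) (pr : P -> Q -> F) (x : P) (xi : Q) : Q :=
  dual_rep pr (fun y => a x (pr y xi) - pr (mul x y) xi).

Definition adstar (F : comRingType) (P Q : lmodType F) (mul : P -> P -> P)
  (a : P -> F -> F) (pr : P -> Q -> F) (x : P) (xi : Q) : Q :=
  dual_rep pr (fun y => a x (pr y xi) - pr (lsa_bracket mul x y) xi).

(* Lie derivative L_x on Gamma(A (x) A), sections viewed as F-bilinear forms
   on Gamma(A^* ); on y1 (x) y2 it gives (x.y1) (x) y2 + y1 (x) [x,y2]. *)
Definition lie_tensor (F : comRingType) (P Q : lmodType F) (mul : P -> P -> P)
  (a : P -> F -> F) (pr : P -> Q -> F) (x : P) (T : Q -> Q -> F) : Q -> Q -> F :=
  fun xi1 xi2 => a x (T xi1 xi2) - T (Lstar mul a pr x xi1) xi2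
                 - T xi1 (adstar mul a pr x xi2).

Definition coboundary1 (F : comRingType) (P Q : lmodType F) (mul : P -> P -> P)
  (a : P -> F -> F) (pr : P -> Q -> F) (eta : Q) : P -> P -> F :=
  fun x1 x2 => a x1 (pr x2 eta) - pr (mul x1 x2) eta.

(* delta_*[x,y]_A = L_x delta_* y - L_y delta_* x *)
Definition bialg_compat (F : comRingType) (P Q : lmodType F) (pr : P -> Q -> F)
  (mulP : P -> P -> P) (aP : P -> F -> F) (mulQ : Q -> Q -> Q) (aQ : Q -> F -> F)
  : Prop :=
  forall (x y : P) (xi1 xi2 : Q),
    coboundary1 mulQ aQ (flip_pair pr) (lsa_bracket mulP x y) xi1 xi2
    = lie_tensor mulP aP pr x (coboundary1 mulQ aQ (flip_pair pr) y) xi1 xi2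
      - lie_tensor mulP aP pr y (coboundary1 mulQ aQ (flip_pair pr) x) xi1 xi2.

Definition is_ls_bialgebroid (F : comRingType) (P Q : lmodType F) (pr : P -> Q -> F)
  (mulP : P -> P -> P) (aP : P -> F -> F) (mulQ : Q -> Q -> Q) (aQ : Q -> F -> F)
  : Prop :=
  is_perfect_pairing pr /\
  is_left_symmetric_algebroid mulP aP /\
  is_left_symmetric_algebroid mulQ aQ /\
  bialg_compat pr mulP aP mulQ aQ /\
  bialg_compat (flip_pair pr) mulQ aQ mulP aP.

(* Main.v *)
Require Import Defs.
From HB Require Import structures.
From mathcomp Require Import all_boot all_algebra.
From mathcomp Require Import ring.
From Stdlib Require Import ClassicalEpsilon.
Import GRing.Theory.
Local Open Scope ring_scope.

Lemma dbl0 (V : zmodType) (a : V) : a = a + a -> a = 0.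
Proof. by move=> h; apply: (addrI a); rewrite addr0 -h. Qed.

Lemma dual_rep_spec (F : comRingType) (P Q : lmodType F) (pr : P -> Q -> F)
  (phi : P -> F) : (exists xi, forall x, pr x xi = phi x) ->
  forall y, pr y (dual_rep pr phi) = phi y.
Proof. by move=> h; rewrite /dual_rep; exact: (epsilon_spec _ _ h). Qed.

Lemma from_eq (R : pzRingType) (a b c : R) : a = b -> c = a - b -> c = 0.
Proof. by move=> -> ->; rewrite subrr. Qed.

Lemma eq_of (R : pzRingType) (a b k : R) : k = 0 -> a - b = - k -> a = b.
Proof. by move=> -> /eqP; rewrite oppr0 subr_eq0 => /eqP. Qed.

Theorem mainTheorem4 (F : comRingType) (P Q : lmodType F) (pr : P -> Q -> F)
  (mulP : P -> P -> P) (aP : P -> F -> F) (mulQ : Q -> Q -> Q) (aQ : Q -> F -> F) :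
  (forall e : F, e * e = 0 -> e = 0) ->
  is_ls_bialgebroid pr mulP aP mulQ aQ ->
  forall (x : P) (xi : Q) (f : F),
    vf_comm (aP x) (aQ xi) f
    = aQ (Lstar mulP aP pr x xi) f - aP (Lstar mulQ aQ (flip_pair pr) xi x) f.
Proof.
move=> red [[prL [prR [ndP [ndQ [repQ repP]]]]]
  [[mPl [mPr [_ [mPsr [mPsl [aPder aPlin]]]]]]
  [[mQl [mQr [_ [mQsr [mQsl [aQder aQlin]]]]]] [cP _]]]].
move=> x xi g.
have pr0l : forall e, pr 0 e = 0.
  by move=> e; apply: dbl0; have := prL 1 0 0 e; rewrite scale1r addr0 mul1r.
have pr0r : forall y, pr y 0 = 0.
  by move=> y; apply: dbl0; have := prR 1 y 0 0; rewrite scale1r addr0 mul1r.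
have prZ : forall c y e, pr (c *: y) e = c * pr y e.
  by move=> c y e; have := prL c y 0 e; rewrite addr0 pr0l addr0.
have prZr : forall c y e, pr y (c *: e) = c * pr y e.
  by move=> c y e; have := prR c y e 0; rewrite addr0 pr0r addr0.
have prD : forall y z e, pr (y + z) e = pr y e + pr z e.
  by move=> y z e; have := prL 1 y z e; rewrite scale1r mul1r.
have prDr : forall y e e', pr y (e + e') = pr y e + pr y e'.
  by move=> y e e'; have := prR 1 y e e'; rewrite scale1r mul1r.
have prN : forall y e, pr (- y) e = - pr y e.
  by move=> y e; rewrite -scaleN1r prZ mulN1r.
have prNr : forall y e, pr y (- e) = - pr y e.
  by move=> y e; rewrite -scaleN1r prZr mulN1r.
have eqQ : forall a b : Q, (forall y, pr y a = pr y b) -> a = b.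
  move=> a b h; apply/eqP; rewrite -subr_eq0; apply/eqP; apply: ndQ => y.
  by rewrite prDr prNr h subrr.
have eqPP : forall a b : P, (forall e, pr a e = pr b e) -> a = b.
  move=> a b h; apply/eqP; rewrite -subr_eq0; apply/eqP; apply: ndP => e.
  by rewrite prD prN h subrr.
have aP0 : forall h, aP 0 h = 0.
  by move=> h; apply: dbl0; have := aPlin 1 0 0 h; rewrite scale1r addr0 mul1r.
have aQ0 : forall h, aQ 0 h = 0.
  by move=> h; apply: dbl0; have := aQlin 1 0 0 h; rewrite scale1r addr0 mul1r.
have aPZ : forall c y h, aP (c *: y) h = c * aP y h.
  by move=> c y h; have := aPlin c y 0 h; rewrite addr0 aP0 addr0.
have aQZ : forall c y h, aQ (c *: y) h = c * aQ y h.
  by move=> c y h; have := aQlin c y 0 h; rewrite addr0 aQ0 addr0.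
have aPD : forall y f h, aP y (f + h) = aP y f + aP y h by move=> y; case: (aPder y).
have aPM : forall y f h, aP y (f * h) = f * aP y h + aP y f * h by move=> y; case: (aPder y).
have aQD : forall y f h, aQ y (f + h) = aQ y f + aQ y h by move=> y; case: (aQder y).
have aQM : forall y f h, aQ y (f * h) = f * aQ y h + aQ y f * h by move=> y; case: (aQder y).
have aPN : forall y h, aP y (- h) = - aP y h.
  by move=> y h; apply/eqP; rewrite -subr_eq0 opprK -aPD addNr; apply/eqP; apply: dbl0;
     rewrite -{1}[0]addr0 aPD.
have aQN : forall y h, aQ y (- h) = - aQ y h.
  by move=> y h; apply/eqP; rewrite -subr_eq0 opprK -aQD addNr; apply/eqP; apply: dbl0;
     rewrite -{1}[0]addr0 aQD.
have mP0l : forall z, mulP 0 z = 0.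
  by move=> z; have := mPsl 0 z z; rewrite !scale0r.
have LS : forall x' e y, pr y (Lstar mulP aP pr x' e) = aP x' (pr y e) - pr (mulP x' y) e.
  move=> x' e; apply: dual_rep_spec; apply: repQ => c y z.
  rewrite mPr mPsr !prD !prZ aPD aPM; ring.
have AS : forall x' e y, pr y (adstar mulP aP pr x' e)
                      = aP x' (pr y e) - pr (lsa_bracket mulP x' y) e.
  move=> x' e; apply: dual_rep_spec; apply: repQ => c y z.
  rewrite /lsa_bracket mPr mPsr mPl mPsl !prD !prN !prD !prZ aPD aPM; ring.
pose dg := dual_rep pr (fun z => aP z g).
have dgS : forall z, pr z dg = aP z g.
  by apply: dual_rep_spec; apply: repQ => c y z; rewrite aPlin.
have LS' : forall e, pr (Lstar mulQ aQ (flip_pair pr) xi x) e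
                     = aQ xi (pr x e) - pr x (mulQ xi e).
  move=> e; apply: (@dual_rep_spec F Q P (flip_pair pr)); rewrite /flip_pair.
  apply: repP => c y z.
  rewrite mQr mQsr !prDr !prZr aQD aQM; ring.
pose K := - aP x (aQ xi g) + aQ (Lstar mulP aP pr x xi) g + pr x (mulQ xi dg).
have h1 : lsa_bracket mulP x (g *: x) = aP x g *: x.
  by rewrite /lsa_bracket mPsr mPsl addrAC subrr add0r.
have hTu : forall a b, coboundary1 mulQ aQ (flip_pair pr) (g *: x) a b
    = g * coboundary1 mulQ aQ (flip_pair pr) x a b + aQ a g * pr x b.
  by move=> a b; rewrite /coboundary1 /flip_pair !prZ aQM; ring.
have hTZl : forall c a b, coboundary1 mulQ aQ (flip_pair pr) x (c *: a) b
    = c * coboundary1 mulQ aQ (flip_pair pr) x a b.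
  by move=> c a b; rewrite /coboundary1 /flip_pair aQZ mQsl prZr; ring.
have hTlin : forall c b d, coboundary1 mulQ aQ (flip_pair pr) x xi (c *: b + d)
    = c * coboundary1 mulQ aQ (flip_pair pr) x xi b
      + coboundary1 mulQ aQ (flip_pair pr) x xi d.
  move=> c b d; rewrite /coboundary1 /flip_pair prDr prZr aQD aQM mQr mQsr.
  rewrite !prDr !prZr; ring.
have hLu : Lstar mulP aP pr (g *: x) xi = g *: Lstar mulP aP pr x xi.
  by apply: eqQ => y; rewrite LS prZr LS aPZ mPsl prZ; ring.
have hadu : forall e, adstar mulP aP pr (g *: x) e
    = g *: adstar mulP aP pr x e + pr x e *: dg.
  move=> e; apply: eqQ => y; rewrite prDr !prZr !AS dgS /lsa_bracket mPsl mPsr.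
  rewrite aPZ !prD !prN !prD !prZ; ring.
have hadx : forall e, pr x (adstar mulP aP pr x e) = aP x (pr x e).
  by move=> e; rewrite AS /lsa_bracket subrr pr0l subr0.
have key : forall e, pr x e * K = 0.
  move=> e; have := cP x (g *: x) xi e.
  rewrite /lie_tensor h1 !hTu hLu hadu hTZl hTlin !aPZ.
  rewrite /coboundary1 /flip_pair !prZ mQsr !prDr !prZr !dgS !hadx.
  rewrite ?(aPD, aPM, aQD, aQM, aPN, aQN) => H.
  apply: (@from_eq F _ _ _ H); rewrite /K; ring.
have Kx : K *: x = 0 by apply: ndP => e; rewrite prZ mulrC key.
have KL : K *: Lstar mulP aP pr x xi = 0.
  apply: ndQ => z; rewrite prZr LS mulrBr -aPZ -prZ -mPsl Kx aP0 mP0l pr0l.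
  by rewrite subrr.
have KK : K * K = 0.
  rewrite {2}/K mulrDr mulrDr mulrN -aPZ -aQZ -prZ KL Kx aP0 aQ0 pr0l.
  by rewrite oppr0 !addr0.
have K0 := red K KK.
apply: (@eq_of F _ _ K K0).
rewrite /vf_comm -(dgS (Lstar mulQ aQ (flip_pair pr) xi x)) LS' dgS /K; ring.
Qed.
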